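(* Let $I_0$ be an interval and let $\{f_k\}_{k\ge0}$ be a $C^1$-uniformly equicontinuous and $C^1$-uniformly bounded sequence of $C^1$ maps $f_k:I_0\to I_0$ with $p=\sup_k\#\mathcal{C}_k<\infty$. Assume that for Lebesgue almost every $x\in I_0$, $$\liminf_{n\to\infty}\frac1n\log|Df^n(x)|\ge\lambda>0.$$ Then, given $\gamma>0$, there exists $\varepsilon>0$ such that for Lebesgue almost every $x\in I_0$, $$\limsup_{n\to\infty}\frac1n\sum_{j=0}^{n-1}\chi_{V_\varepsilon\mathcal{C}_j}(f^j(x))<\gamma.$$
   Context: $\mathcal{C}_k$ is the set of critical points of $f_k$; $f^j=f_{j-1}\circ\cdots\circ f_0$, $f^0=\mathrm{id}$. $V_\varepsilon\mathcal{C}_k$ is the union of the balls $B(c,\varepsilon)$ over $c\in\mathcal{C}_k$; $\chi$ is the indicator function. $C^1$-uniformly equicontinuous: for every $\zeta>0$ there is $\varepsilon>0$ such that $|x-y|<\varepsilon$ implies $|f_k(x)-f_k(y)|<\zeta$ and $|Df_k(x)-Df_k(y)|<\zeta$ for all $k$. $C^1$-uniformly bounded: there is $\Gamma>0$ with $|f_k(x)|,|Df_k(x)|\le\Gamma$ for all $x,k$. *)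

(* Defs.v *)
From HB Require Import structures.
From mathcomp Require Import all_boot all_order all_algebra.
From mathcomp Require Import all_classical all_reals all_analysis.
Set Implicit Arguments. Unset Strict Implicit. Unset Printing Implicit Defensive.
Import Order.TTheory GRing.Theory Num.Theory.
Import numFieldNormedType.Exports.
Local Open Scope classical_set_scope.
Local Open Scope ring_scope.

Fixpoint fiter (R : realType) (f : nat -> R -> R) (j : nat) (x : R) : R :=
  match j with
  | 0%N => x
  | j'.+1 => f j' (fiter f j' x)
  end.

(* Derivative of f^n at x via the chain rule: Df^n(x) = prod_{j<n} Df_j(f^j x). *)
Definition Dfiter (R : realType) (f Df : nat -> R -> R) (n : nat) (x : R) : R :=
  \prod_(j < n) Df j (fiter f j x).

Definition crit (R : realType) (I0 : interval R) (Df : nat -> R -> R) (k : nat)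
  : set R := [set c | c \in I0 /\ Df k c = 0].

Definition Vnbhd (R : realType) (eps : R) (C : set R) : set R :=
  \bigcup_(c in C) ball c eps.

Definition C1_on (R : realType) (I0 : interval R) (g Dg : R -> R) : Prop :=
  {within [set` I0], continuous g} /\
  {within [set` I0], continuous Dg} /\
  (forall x, interior [set` I0] x -> is_derive x 1 g (Dg x)).

(* Main.v *)
Require Import Defs.
From HB Require Import structures.
From mathcomp Require Import all_boot all_order all_algebra.
From mathcomp Require Import all_classical all_reals all_analysis.
From mathcomp Require Import lra.
Import Order.TTheory GRing.Theory Num.Theory.
Import numFieldNormedType.Exports.
Local Open Scope classical_set_scope.
Local Open Scope ring_scope.

Lemma ln_prod_le (R : realType) n (a b : nat -> R) :
  (forall j, (j < n)%N -> a j != 0 -> ln `|a j| <= b j) ->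
  \prod_(j < n) a j != 0 -> ln `|\prod_(j < n) a j| <= \sum_(j < n) b j.
Proof.
elim: n => [|n IH] H.
  by rewrite !big_ord0 normr1 ln1.
rewrite !big_ord_recr /= mulf_eq0 negb_or => /andP[P0 a0].
rewrite normrM lnM ?posrE ?normr_gt0 //.
apply: lerD; last exact: H.
by apply: IH => // j jn; apply: H; rewrite ltnS ltnW.
Qed.

Lemma fiter_in (R : realType) (I0 : interval R) (f : nat -> R -> R) x j :
  (forall k x, x \in I0 -> f k x \in I0) -> x \in I0 -> fiter f j x \in I0.
Proof. by move=> hf hx; elim: j => //= j IH; apply: hf. Qed.

Local Open Scope ereal_scope.
Lemma einf_pos (R : realType) (u : (\bar R)^nat) :
  0 < limn_einf u -> exists N, forall n, (N <= n)%N -> 0 < u n.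
Proof.
rewrite limn_einf_lim (cvg_lim _ (@cvg_einfs_sup _ u)) // => /ereal_sup_gt[_ [N _ <-] hN].
exists N => n Nn; apply: (lt_le_trans hN); apply: ereal_inf_lbound; by exists n.
Qed.

Lemma esup_le (R : realType) (u : (\bar R)^nat) (b : \bar R) N :
  (forall n, (N <= n)%N -> u n <= b) -> limn_esup u <= b.
Proof.
move=> H; rewrite limn_esup_lim; apply: lime_le; first exact: is_cvg_esups.
exists N => // m /= Nm; apply: ub_ereal_sup => _ [k /= mk <-].
apply: H; exact: leq_trans Nm mk.
Qed.
Local Close Scope ereal_scope.

Lemma pointwise (R : realType) (I0 : interval R) (f Df : nat -> R -> R)
  (G zeta eps : R) (x : R) :
  (forall k x, x \in I0 -> f k x \in I0) ->
  (forall k x y, x \in I0 -> y \in I0 -> `|x - y| < eps -> `|Df k x - Df k y| < zeta) ->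
  (forall k x, x \in I0 -> `|Df k x| <= G) ->
  0 < zeta -> zeta < 1 -> 1 <= G -> x \in I0 ->
  (0 < limn_einf (fun n => (ln `|Dfiter f Df n x| / n%:R)%:E))%E ->
  (limn_esup (fun n => ((\sum_(j < n)
          \1_(Vnbhd eps (crit I0 Df j)) (fiter f j x)) / n%:R)%:E)
   <= (ln G / (ln G - ln zeta))%:E)%E.
Proof.
move=> hf hEq hB z0 z1 G1 xI /einf_pos [N HN].
set L := ln G; set K := L - ln zeta.
have L0 : 0 <= L by apply: ln_ge0.
have lnz : ln zeta < 0 by apply: ln_lt0; rewrite z0 z1.
have K0 : 0 < K by rewrite /K; lra.
apply: (@esup_le _ _ _ N.+1) => n Nn.
have n0 : (0 < n)%N by apply: leq_trans Nn.
have n0R : 0 < n%:R :> R by rewrite ltr0n.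
have := HN n (ltnW Nn); rewrite lte_fin => hu.
set P := Dfiter f Df n x in hu.
have lP : 0 < ln `|P|.
  by rewrite -(divfK (lt0r_neq0 n0R) (ln `|P|)) mulr_gt0.
have P0 : P != 0.
  apply/negP => /eqP P0; move: lP; rewrite P0 normr0.
  by have := @ln_le0 R 0 ler01; lra.
set S := \sum_(j < n) _.
have H : ln `|P| <= \sum_(j < n) (L - K * \1_(Vnbhd eps (crit I0 Df j)) (fiter f j x)).
  move: P0; rewrite /P /Dfiter => P0.
  apply: (@ln_prod_le R n (fun j => Df j (fiter f j x)) (fun j => L - K * \1_(Vnbhd eps (crit I0 Df j)) (fiter f j x))) => // j jn a0.
  have yI := @fiter_in R I0 f x j hf xI.
  rewrite indicE; case: (boolP (fiter f j x \in Vnbhd eps (crit I0 Df j))) => hV.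
    rewrite mulr1 /K opprB addrCA subrr addr0.
    move: hV; rewrite inE => -[c [cI Dc] bc].
    rewrite ler_ln ?posrE ?normr_gt0 //.
    have := hEq j _ _ yI cI; rewrite Dc subr0 => h; apply/ltW/h.
    move: bc; rewrite -ball_normE /ball_ /= => h'; by rewrite distrC.
  rewrite mulr0 subr0 ler_ln ?posrE ?normr_gt0 //; last by lra.
  exact: hB.
move: H; rewrite big_split /= sumr_const card_ord sumrN -mulr_sumr => H.
have HS : K * S < n%:R * L by move: H; rewrite -/S mulr_natl; lra.
rewrite lee_fin ler_pdivrMr // mulrAC ler_pdivlMr //.
by rewrite mulrC (mulrC L); apply: ltW.
Qed.

Theorem corollary4p4 (R : realType) (I0 : interval R) (f Df : nat -> R -> R)
  (lambda : R) :
  (forall k x, x \in I0 -> f k x \in I0) ->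
  (forall k, C1_on I0 (f k) (Df k)) ->
  (* C^1-uniformly equicontinuous *)
  (forall zeta : R, 0 < zeta -> exists2 eps : R, 0 < eps &
     forall k x y, x \in I0 -> y \in I0 -> `|x - y| < eps ->
       `|f k x - f k y| < zeta /\ `|Df k x - Df k y| < zeta) ->
  (* C^1-uniformly bounded *)
  (exists Gamma : R, forall k x, x \in I0 ->
       `|f k x| <= Gamma /\ `|Df k x| <= Gamma) ->
  (* p = sup_k #C_k < oo *)
  (exists p : nat, forall k, (crit I0 Df k #<= `I_p)%card) ->
  0 < lambda ->
  {ae (@lebesgue_measure R), forall x, x \in I0 ->
     (lambda%:E <= limn_einf (fun n => (ln `|Dfiter f Df n x| / n%:R)%:E))%E} ->
  forall gamma : R, 0 < gamma ->
  exists2 eps : R, 0 < eps &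
  {ae (@lebesgue_measure R), forall x, x \in I0 ->
     (limn_esup (fun n => ((\sum_(j < n)
          \1_(Vnbhd eps (crit I0 Df j)) (fiter f j x)) / n%:R)%:E)
      < gamma%:E)%E}.
Proof.
move=> hf _ hEq [Gamma hB] _ l0 hae gamma g0.
set G := Num.max Gamma 1.
have G1 : 1 <= G by rewrite /G le_max lexx orbT.
set L := ln G.
have L0 : 0 <= L by apply: ln_ge0.
set zeta := expR (- (L / gamma + 1)).
have z0 : 0 < zeta by apply: expR_gt0.
have z1 : zeta < 1.
  rewrite /zeta expR_lt1 oppr_lt0; apply: ltr_wpDl => //; exact: divr_ge0 (ltW g0).
have [eps e0 heps] := hEq zeta z0.
exists eps => //.
apply: filterS hae; first exact: (ae_filter_ringOfSetsType lebesgue_measure).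
move=> x Hx xI.
apply: (le_lt_trans (@pointwise R I0 f Df G zeta eps x hf _ _ z0 z1 G1 xI _)).
- by move=> k y z yI zI yz; have [] := heps k y z yI zI yz.
- move=> k y yI; have [_ h] := hB k y yI; apply: (le_trans h).
  by rewrite /G le_max lexx.
- by apply: lt_le_trans (Hx xI); rewrite lte_fin.
rewrite lte_fin /zeta expRK -/L.
have K0 : 0 < L - - (L / gamma + 1) by have := divr_ge0 L0 (ltW g0); lra.
rewrite ltr_pdivrMr // mulrDr mulrN mulrN opprK mulrDr mulrCA divff ?gt_eqF //.
nra.
Qed.
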